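(* Let $0<\gamma<1/3$. There are positive constants $c_1=c_1(\gamma)$ and $c_2=c_2(\gamma)$ such that for $\pi(N)(1+o(1))$ primes $p\le N$ (as $N\to\infty$) we have $$c_1N^{\gamma/2}\le\frac{1}{p}\sum_{x=0}^{p-1}\left|\sum_{n\le N^{\gamma}}e^{2\pi i\frac{x}{p}F_n}\right|\le c_2N^{\gamma/2}.$$
   Context: $\{F_n\}$ is the Fibonacci sequence: $F_1=F_2=1$, $F_{n+2}=F_{n+1}+F_n$ for $n\ge1$. $\pi(N)$ denotes the number of primes $p\le N$. *)

(* Defs.v *)
From Stdlib Require Import Reals Lra Lia ZArith Znumtheory List.
From Coquelicot Require Import Coquelicot.
Open Scope R_scope.

Fixpoint fib (n : nat) : nat :=
  match n with
  | O => O
  | S m => match m with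
           | O => 1%nat
           | S k => (fib m + fib k)%nat
           end
  end.

Definition e2pi (t : R) : C := (cos (2 * PI * t), sin (2 * PI * t)).

Definition isprime (p : nat) : bool :=
  if prime_dec (Z.of_nat p) then true else false.

Definition prime_pi (N : nat) : nat :=
  length (filter isprime (seq 0 (S N))).

(* The inner sum  sum_{1 <= n <= N^gamma} e(x F_n / p).  Since N^gamma <= N
   for N >= 1, the index n ranges over 1..N restricted to n <= N^gamma. *)
Definition fib_sum (gamma : R) (N p x : nat) : C :=
  fold_right Cplus 0%C
    (map (fun n => e2pi (INR x * INR (fib n) / INR p))
         (filter (fun n => if Rle_dec (INR n) (Rpower (INR N) gamma) then true else false)
                 (seq 1 N))).

Definition avg_abs (gamma : R) (N p : nat) : R :=
  / INR p * fold_right Rplus 0 (map (fun x => Cmod (fib_sum gamma N p x)) (seq 0 p)).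

Definition good (gamma c1 c2 : R) (N p : nat) : bool :=
  if Rle_dec (c1 * Rpower (INR N) (gamma / 2)) (avg_abs gamma N p) then
    if Rle_dec (avg_abs gamma N p) (c2 * Rpower (INR N) (gamma / 2)) then true else false
  else false.

Definition good_count (gamma c1 c2 : R) (N : nat) : nat :=
  length (filter (fun p => andb (isprime p) (good gamma c1 c2 N p)) (seq 0 (S N))).

(* Main.v *)
Require Import Defs.
From Stdlib Require Import Reals Lra Lia Psatz ZArith Znumtheory List Bool.
From Coquelicot Require Import Coquelicot.
From mathcomp Require ssreflect ssrnat binomial prime bigop zify.
Module Br.
Import ssreflect ssrfun ssrbool eqtype ssrnat seq div prime zify.
Local Open Scope nat_scope.

Lemma dvd_bridge d p : d %| p <-> (Z.of_nat d | Z.of_nat p)%Z.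
Proof.
split.
  move/dvdnP=> [k ->]. exists (Z.of_nat k). lia.
move=> [z hz]. apply/dvdnP.
case: (Z.eq_dec (Z.of_nat d) 0) => hd.
  exists 0. lia.
have hz0 : (0 <= z)%Z by nia.
exists (Z.to_nat z). nia.
Qed.

Lemma prime_bridge p : prime p = isprime p.
Proof.
rewrite /isprime. case: (prime_dec (Z.of_nat p)) => h.
  apply/primeP. move: h => /prime_alt [h1 h2]. split; first by lia.
  move=> d hd. have hd' := hd. move/dvd_bridge: hd => hz.
  have dpos : 0 < d.
    rewrite lt0n; apply/eqP => d0; move: hd'; rewrite d0 dvd0n => /eqP; lia.
  have dle : d <= p by apply: dvdn_leq => //; lia.
  rewrite /=; case: (d =P 1) => [//|n1]; case: (d =P p) => [//|np] /=.
  exfalso. apply: (h2 (Z.of_nat d)) => //. lia.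
apply/negbTE/negP => /primeP [h1 h2]. apply: h. apply/prime_alt. split; first by lia.
move=> n hn hdiv.
have hn0 : (0 <= n)%Z by lia.
have : Z.to_nat n %| p by apply/dvd_bridge; rewrite Z2Nat.id.
move/h2 => /orP [] /eqP; lia.
Qed.

Lemma iota_seq m n : iota m n = List.seq m n.
Proof. by elim: n m => //= n IH m; rewrite IH. Qed.

Lemma count_length (P : nat -> bool) l : count P l = length (List.filter P l).
Proof. elim: l => //= x l IH. case: (P x) => /=; lia. Qed.

Lemma count_primes m : count prime (iota 0 m) = length (List.filter isprime (List.seq 0 m)).
Proof.
rewrite iota_seq count_length. f_equal. apply: List.filter_ext => x. by rewrite prime_bridge.
Qed.
End Br.

Module Cheb.
Import ssreflect ssrfun ssrbool eqtype ssrnat seq div binomial prime bigop zify.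
Local Open Scope nat_scope.

Lemma central_lb n : 2 ^ n <= 'C(n.*2, n).
Proof.
elim: n => [|n IH]; first by rewrite bin0.
have e : (n.+1).*2 = (n.*2).+2 by rewrite doubleS.
rewrite e binS binS.
have h1 : 'C(n.*2, n) <= 'C((n.*2).+1, n) by apply: leq_bin2l.
rewrite expnS mul2n -addnn.
apply: leq_add; last by apply: leq_trans IH h1.
by apply: leq_trans IH _; rewrite leq_addl.
Qed.

Lemma div_double_le n q : 0 < q -> n.*2 %/ q <= (n %/ q).*2 + 1.
Proof.
move=> q0.
have h1 : n < (n %/ q).+1 * q by rewrite -ltn_divLR.
have h2 : n.*2 %/ q < (n %/ q).*2.+2 by rewrite ltn_divLR //; nia.
lia.
Qed.

Lemma sum_ind_le (t M : nat) : \sum_(1 <= k < M.+1) (k <= t) <= t.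
Proof.
suff : \sum_(1 <= k < M.+1) (k <= t) <= minn M t by move=> h; apply: leq_trans h (geq_minr _ _).
elim: M => [|M IH]; first by rewrite big_geq.
rewrite big_nat_recr //=.
case: (leqP M.+1 t) => h.
  rewrite addn1. lia.
rewrite addn0. lia.
Qed.

Lemma logn_central p n : prime p -> 0 < n ->
  logn p 'C(n.*2, n) <= trunc_log p n.*2.
Proof.
move=> pp n0.
have p1 := prime_gt1 pp.
set t := trunc_log p n.*2.
have hf : 'C(n.*2, n) * (n`! * n`!) = (n.*2)`!.
  have := bin_fact (leq_addr n n). rewrite addnK addnn. by [].
have C0 : 0 < 'C(n.*2, n) by rewrite bin_gt0 -addnn leq_addr.
have eq1 : logn p 'C(n.*2, n) + (logn p n`!).*2 = logn p (n.*2)`!.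
  by rewrite -hf lognM ?muln_gt0 ?fact_gt0 // lognM ?fact_gt0 // addnn.
have ext : \sum_(1 <= k < n.+1) n %/ p ^ k = \sum_(1 <= k < (n.*2).+1) n %/ p ^ k.
  rewrite [RHS](big_cat_nat _ (n := n.+1)) //=; last by rewrite -addnn; lia.
  rewrite [X in _ = _ + X]big1_seq ?addn0 // => k.
  move=> /andP[_]; rewrite mem_index_iota => /andP[hk _]; apply: divn_small.
  exact: ltn_trans hk (ltn_expl k p1).
have key : \sum_(1 <= k < (n.*2).+1) n.*2 %/ p ^ k <=
    \sum_(1 <= k < (n.*2).+1) ((n %/ p ^ k).*2 + (k <= t)).
  apply: leq_sum => k _.
  case: (leqP k t) => hk.
    apply: div_double_le. by rewrite expn_gt0 ltnW.
  rewrite divn_small //. apply: leq_trans (trunc_log_ltn _ p1) _.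
  by rewrite leq_exp2l.
rewrite big_split /= in key.
have sd : \sum_(1 <= k < (n.*2).+1) (n %/ p ^ k).*2 = (\sum_(1 <= k < (n.*2).+1) n %/ p ^ k).*2.
  rewrite -[RHS]mul2n big_distrr /=; apply: eq_bigr => k _; by rewrite mul2n.
rewrite sd -ext -!logn_fact // in key.
have := sum_ind_le t (n.*2).
lia.
Qed.

Lemma pow_logn_le p n : 0 < n -> p \in primes 'C(n.*2, n) -> p ^ logn p 'C(n.*2, n) <= n.*2.
Proof.
move=> n0 hp.
have pp : prime p by move: hp; rewrite mem_primes => /andP[].
have p1 := prime_gt1 pp.
apply: leq_trans (trunc_logP p1 _); last by rewrite double_gt0.
by rewrite leq_exp2l // logn_central.
Qed.

Lemma cheb n : 0 < n -> 2 ^ n <= (n.*2) ^ (count prime (iota 0 (n.*2).+1)).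
Proof.
move=> n0.
have C0 : 0 < 'C(n.*2, n) by rewrite bin_gt0 -addnn leq_addr.
apply: leq_trans (central_lb n) _.
rewrite {1}(prod_prime_decomp C0) prime_decompE big_map /=.
rewrite big_seq.
apply: leq_trans (leq_prod (E2 := fun _ => n.*2) _) _.
  by move=> i hi; apply: pow_logn_le.
rewrite -big_seq big_const_seq count_predT iter_muln_1.
apply: leq_pexp2l; first by rewrite double_gt0.
rewrite -size_filter. apply: uniq_leq_size; first exact: primes_uniq.
move=> p hp. rewrite mem_filter mem_iota /=.
have pp : prime p by move: hp; rewrite mem_primes => /andP[].
rewrite pp /=.
have hl : 0 < logn p 'C(n.*2, n) by rewrite logn_gt0.
have h := logn_central p n pp n0.
have t0 : 0 < trunc_log p n.*2 by apply: leq_trans hl h.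
move: t0; rewrite trunc_log_gt0 => /andP[_ h2].
have := prime_gt1 pp. lia.
Qed.

Lemma expn_pow m k : expn m k = Nat.pow m k.
Proof. elim: k => //= k IH. by rewrite expnS IH. Qed.

Lemma cheb_std n : (0 < n)%coq_nat ->
  (2 ^ n <= (2 * n) ^ length (List.filter isprime (List.seq 0 (S (2 * n)))))%coq_nat.
Proof.
move=> /ltP n0. have := cheb n n0. rewrite Br.count_primes -mul2n !expn_pow. by move/leP.
Qed.
End Cheb.


Open Scope R_scope.
Open Scope bool_scope.

Definition sumR {A} (l : list A) (f : A -> R) : R := fold_right Rplus 0 (map f l).

Lemma sumR_nil {A} (f : A -> R) : sumR nil f = 0.
Proof. reflexivity. Qed.
Lemma sumR_cons {A} (a : A) l f : sumR (a :: l) f = f a + sumR l f.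
Proof. reflexivity. Qed.
Lemma sumR_app {A} (l1 l2 : list A) f : sumR (l1 ++ l2) f = sumR l1 f + sumR l2 f.
Proof. induction l1; simpl; rewrite ?sumR_nil, ?sumR_cons; [lra|]. unfold sumR in *; simpl. rewrite IHl1. lra. Qed.

Lemma sumR_ext {A} (l : list A) f g : (forall x, In x l -> f x = g x) -> sumR l f = sumR l g.
Proof. induction l; intros H; [reflexivity|]. rewrite !sumR_cons, H, IHl; [reflexivity| |left; reflexivity].
  intros; apply H; right; auto. Qed.

Lemma sumR_plus {A} (l : list A) f g : sumR l (fun x => f x + g x) = sumR l f + sumR l g.
Proof. induction l; [unfold sumR; simpl; lra|]. rewrite !sumR_cons, IHl. lra. Qed.

Lemma sumR_minus {A} (l : list A) f g : sumR l (fun x => f x - g x) = sumR l f - sumR l g.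
Proof. induction l; [unfold sumR; simpl; lra|]. rewrite !sumR_cons, IHl. lra. Qed.

Lemma sumR_scal {A} (l : list A) c f : sumR l (fun x => c * f x) = c * sumR l f.
Proof. induction l; [unfold sumR; simpl; lra|]. rewrite !sumR_cons, IHl. lra. Qed.

Lemma sumR_le {A} (l : list A) f g : (forall x, In x l -> f x <= g x) -> sumR l f <= sumR l g.
Proof. induction l; intros H; [unfold sumR; simpl; lra|]. rewrite !sumR_cons.
  assert (f a <= g a) by (apply H; left; auto).
  assert (sumR l f <= sumR l g) by (apply IHl; intros; apply H; right; auto). lra. Qed.

Lemma sumR_nonneg {A} (l : list A) f : (forall x, In x l -> 0 <= f x) -> 0 <= sumR l f.
Proof. intros H. replace 0 with (sumR l (fun _ => 0)).
  apply sumR_le; auto. induction l; [reflexivity|]. rewrite sumR_cons, IHl; [lra|]. intros; apply H; right; auto. Qed.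

Lemma sumR_const {A} (l : list A) c : sumR l (fun _ => c) = INR (length l) * c.
Proof. induction l; [unfold sumR; simpl; lra|]. rewrite sumR_cons, IHl. simpl length. rewrite S_INR. lra. Qed.

Lemma sumR_swap {A B} (l1 : list A) (l2 : list B) f :
  sumR l1 (fun x => sumR l2 (fun y => f x y)) = sumR l2 (fun y => sumR l1 (fun x => f x y)).
Proof. induction l1; simpl.
  - unfold sumR at 1; simpl. symmetry. rewrite <- (Rmult_0_r (INR (length l2))), <- sumR_const. reflexivity.
  - rewrite sumR_cons, IHl1. rewrite <- sumR_plus. apply sumR_ext. intros; rewrite sumR_cons; reflexivity. Qed.

Lemma sumR_mul {A B} (l1 : list A) (l2 : list B) f g :
  sumR l1 f * sumR l2 g = sumR l1 (fun x => sumR l2 (fun y => f x * g y)).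
Proof. induction l1; [unfold sumR; simpl; lra|]. rewrite !sumR_cons, <- IHl1, sumR_scal. lra. Qed.

Lemma sumR_term {A} (l : list A) f x : In x l -> (forall y, In y l -> 0 <= f y) -> f x <= sumR l f.
Proof. induction l; intros Hx H; [destruct Hx|]. rewrite sumR_cons. destruct Hx as [<-|Hx].
  - assert (0 <= sumR l f) by (apply sumR_nonneg; intros; apply H; right; auto). lra.
  - assert (0 <= f a) by (apply H; left; auto). assert (f x <= sumR l f) by (apply IHl; auto; intros; apply H; right; auto). lra. Qed.

Definition ind (b : bool) : R := if b then 1 else 0.
Lemma ind_nonneg b : 0 <= ind b. Proof. destruct b; simpl; lra. Qed.
Lemma ind_le1 b : ind b <= 1. Proof. destruct b; simpl; lra. Qed.

Lemma sumR_filter {A} (l : list A) (P : A -> bool) : sumR l (fun x => ind (P x)) = INR (length (filter P l)).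
Proof. induction l; [reflexivity|]. rewrite sumR_cons, IHl. simpl. destruct (P a); simpl length; rewrite ?S_INR; simpl; lra. Qed.

Lemma CS {A} (l : list A) u v : (sumR l (fun x => u x * v x))^2 <= sumR l (fun x => u x ^ 2) * sumR l (fun x => v x ^ 2).
Proof. induction l as [|a0 l IHl]; [unfold sumR; simpl; lra|]. rewrite !sumR_cons.
  set (S := sumR l (fun x => u x * v x)) in *. set (U := sumR l (fun x => u x ^ 2)) in *. set (V := sumR l (fun x => v x ^ 2)) in *.
  assert (HU : 0 <= U) by (apply sumR_nonneg; intros; nra).
  assert (HV : 0 <= V) by (apply sumR_nonneg; intros; nra).
  set (a := u a0) in *. set (b := v a0) in *.
  assert (K : 2 * S * a * b <= U * b^2 + V * a^2).
  { assert (E : (U*b^2 + V*a^2)^2 - (2*S*a*b)^2 = (U*b^2 - V*a^2)^2 + 4*a^2*b^2*(U*V - S^2)) by ring.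
    assert (0 <= U*b^2 + V*a^2) by nra.
    assert (0 <= (U*b^2 + V*a^2)^2 - (2*S*a*b)^2).
    { rewrite E. apply Rplus_le_le_0_compat; [apply pow2_ge_0|].
      apply Rmult_le_pos; [|lra]. assert (0 <= a^2 * b^2) by (apply Rmult_le_pos; apply pow2_ge_0). lra. }
    destruct (Rle_dec (2*S*a*b) (U*b^2 + V*a^2)) as [|Hn]; [assumption|].
    exfalso. apply Rnot_le_lt in Hn. nra. }
  replace ((a*b + S)^2) with (a^2*b^2 + 2*S*a*b + S^2) by ring.
  replace ((a^2 + U)*(b^2+V)) with (a^2*b^2 + (U*b^2 + V*a^2) + U*V) by ring.
  lra. Qed.

Lemma holder {A} (l : list A) a : (forall x, In x l -> 0 <= a x) ->
  (sumR l (fun x => a x ^ 2))^3 <= (sumR l a)^2 * sumR l (fun x => a x ^ 4).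
Proof. intros Ha.
  set (S1 := sumR l a). set (S2 := sumR l (fun x => a x ^ 2)). set (S3 := sumR l (fun x => a x ^ 3)).
  set (S4 := sumR l (fun x => a x ^ 4)).
  assert (H1 : S2^2 <= S1 * S3).
  { pose proof (CS l (fun x => sqrt (a x)) (fun x => a x * sqrt (a x))) as C. cbv beta in C.
    assert (E1 : sumR l (fun x => sqrt (a x) * (a x * sqrt (a x))) = S2).
    { apply sumR_ext; intros x Hx. pose proof (sqrt_sqrt (a x) (Ha x Hx)). nra. }
    assert (E2 : sumR l (fun x => sqrt (a x) ^ 2) = S1).
    { apply sumR_ext; intros x Hx. pose proof (sqrt_sqrt (a x) (Ha x Hx)). nra. }
    assert (E3 : sumR l (fun x => (a x * sqrt (a x)) ^ 2) = S3).
    { apply sumR_ext; intros x Hx. pose proof (sqrt_sqrt (a x) (Ha x Hx)). nra. }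
    rewrite E1, E2, E3 in C. exact C. }
  assert (H2 : S3^2 <= S2 * S4).
  { pose proof (CS l a (fun x => a x ^ 2)) as C. cbv beta in C.
    assert (E1 : sumR l (fun x => a x * a x ^ 2) = S3) by (apply sumR_ext; intros; ring).
    assert (E3 : sumR l (fun x => (a x ^ 2) ^ 2) = S4) by (apply sumR_ext; intros; ring).
    rewrite E1, E3 in C. exact C. }
  assert (P1 : 0 <= S1) by (apply sumR_nonneg; auto).
  assert (P2 : 0 <= S2) by (apply sumR_nonneg; intros; pose proof (Ha x H); nra).
  assert (P3 : 0 <= S3) by (apply sumR_nonneg; intros; pose proof (Ha x H); nra).
  assert (P4 : 0 <= S4) by (apply sumR_nonneg; intros; pose proof (Ha x H); nra).
  destruct (Req_dec S2 0) as [Z|Z].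
  - rewrite Z. nra.
  - assert (S2^4 <= S1^2 * S2 * S4).
    { assert (S2^4 = (S2^2)^2) by ring. assert ((S2^2)^2 <= (S1*S3)^2) by (apply pow_incr; nra). nra. }
    assert (0 < S2) by lra.
    apply Rmult_le_reg_r with S2; [lra|]. nra. Qed.
Lemma trig_int z : cos (2*PI*IZR z) = 1 /\ sin (2*PI*IZR z) = 0.
Proof.
  assert (H : forall n, cos (2*PI*INR n) = 1 /\ sin (2*PI*INR n) = 0).
  { intros n. pose proof (cos_period 0 n). pose proof (sin_period 0 n).
    rewrite cos_0 in *. rewrite sin_0 in *. replace (0 + 2 * INR n * PI) with (2*PI*INR n) in * by ring. auto. }
  destruct (Z_le_gt_dec 0 z).
  - replace z with (Z.of_nat (Z.to_nat z)) by lia. rewrite <- INR_IZR_INZ. apply H.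
  - replace z with (- Z.of_nat (Z.to_nat (-z)))%Z by lia. rewrite opp_IZR, <- INR_IZR_INZ.
    replace (2 * PI * - INR (Z.to_nat (- z))) with (- (2 * PI * INR (Z.to_nat (- z)))) by ring.
    rewrite cos_neg, sin_neg. destruct (H (Z.to_nat (-z))) as [-> ->]. split; lra.
Qed.

Lemma telescope (g : nat -> R) a n : sumR (seq a n) (fun x => g (S x) - g x) = g (a + n)%nat - g a.
Proof. revert a; induction n; intros a; simpl.
  - rewrite Nat.add_0_r. unfold sumR; simpl; lra.
  - rewrite sumR_cons, IHn. replace (S a + n)%nat with (a + S n)%nat by lia. lra. Qed.

Lemma cos_sum (p : nat) (M : Z) : (0 < p)%nat ->
  sumR (seq 0 p) (fun x => cos (2*PI*(INR x * IZR M / INR p))) =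
  if Z.eqb (M mod Z.of_nat p) 0 then INR p else 0.
Proof.
  intros Hp. assert (HpR : 0 < INR p) by (apply lt_0_INR; lia).
  destruct (Z.eqb_spec (M mod Z.of_nat p) 0) as [E|E].
  - apply Z.mod_divide in E; [|lia]. destruct E as [k Hk].
    transitivity (sumR (seq 0 p) (fun _ => 1)).
    2: { rewrite sumR_const, length_seq; ring. }
    apply sumR_ext. intros x _.
    replace (2 * PI * (INR x * IZR M / INR p)) with (2*PI*IZR (Z.of_nat x * k)).
    + apply trig_int.
    + rewrite Hk, !mult_IZR, <- !INR_IZR_INZ. field. lra.
  - set (al := 2*PI*IZR M / INR p).
    assert (Hs : sin (al/2) <> 0).
    { intros Hs. apply sin_eq_0_0 in Hs. destruct Hs as [k Hk]. apply E.
      apply Z.mod_divide; [lia|]. exists k. apply eq_IZR. rewrite mult_IZR, <- INR_IZR_INZ.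
      unfold al in Hk. assert (PI > 0) by apply PI_RGT_0.
      apply Rmult_eq_reg_r with (PI / INR p). 2: { apply Rgt_not_eq. apply Rdiv_lt_0_compat; lra. }
      replace (IZR M * (PI / INR p)) with (2 * PI * IZR M / INR p / 2) by (field; lra).
      rewrite Hk. field. lra. }
    set (g := fun x : nat => sin (INR x * al - al/2)).
    assert (T : sumR (seq 0 p) (fun x => 2 * sin (al/2) * cos (2 * PI * (INR x * IZR M / INR p))) =
                sumR (seq 0 p) (fun x => g (S x) - g x)).
    { apply sumR_ext. intros x _. unfold g. rewrite S_INR.
      replace ((INR x + 1) * al - al / 2) with (INR x * al + al/2) by (unfold al; field; lra).
      replace (2 * PI * (INR x * IZR M / INR p)) with (INR x * al) by (unfold al; field; lra).
      rewrite sin_plus, sin_minus. ring. }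
    rewrite sumR_scal, telescope in T. unfold g in T.
    replace (INR (0 + p) * al - al/2) with (2*PI*IZR M - al/2) in T.
    2: { rewrite Nat.add_0_l. unfold al. field. lra. }
    rewrite sin_minus in T. destruct (trig_int M) as [C S]. rewrite C, S in T. simpl INR in T.
    replace (0 * al - al/2) with (- (al/2)) in T by ring. rewrite sin_neg in T.
    assert (Z0 : 2 * sin (al / 2) * sumR (seq 0 p) (fun x => cos (2 * PI * (INR x * IZR M / INR p))) = 0) by lra.
    apply Rmult_integral in Z0. destruct Z0 as [Z0|Z0]; [lra|exact Z0].
Qed.
Lemma fib_SS n : fib (S (S n)) = (fib (S n) + fib n)%nat.
Proof. reflexivity. Qed.

Lemma fib_step n : (fib n <= fib (S n))%nat.
Proof. destruct n; [simpl; lia|]. destruct n; [simpl; lia|]. rewrite (fib_SS (S n)). lia. Qed.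

Lemma fib_mono n m : (n <= m)%nat -> (fib n <= fib m)%nat.
Proof. induction 1; [lia|]. pose proof (fib_step m). lia. Qed.

Lemma fib_pos n : (1 <= n)%nat -> (1 <= fib n)%nat.
Proof. intros H. pose proof (fib_mono 1 n H). simpl in H0. lia. Qed.

Lemma fib_le_pow n : (fib n <= 2 ^ n)%nat.
Proof. induction n as [n IH] using (well_founded_induction lt_wf).
  destruct n; [simpl; lia|]. destruct n; [simpl; lia|]. rewrite fib_SS.
  pose proof (IH (S n) ltac:(lia)). pose proof (IH n ltac:(lia)).
  change (2 ^ S (S n))%nat with (2 * (2 * 2 ^ n))%nat. simpl (2 ^ S n)%nat in *. lia. Qed.

Lemma fib_strict n : (2 <= n)%nat -> (fib n < fib (S n))%nat.
Proof. intros H. destruct n as [|[|n]]; try lia. rewrite (fib_SS (S n)). pose proof (fib_pos (S n)). lia. Qed.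

Lemma fib_eq_close x y : (1 <= x)%nat -> (x <= y)%nat -> fib x = fib y -> (y < x + 2)%nat.
Proof. intros H1 H2 H3. destruct (Nat.lt_ge_cases y (x+2)); auto.
  assert (fib x <= fib (y - 1))%nat by (apply fib_mono; lia).
  assert (fib (y-1) < fib (S (y-1)))%nat by (apply fib_strict; lia).
  replace (S (y-1)) with y in * by lia. lia. Qed.

Lemma fib_3 x : (1 <= x)%nat -> (2 * fib x < fib (x + 3))%nat.
Proof. intros H. replace (x+3)%nat with (S (S (S x))) by lia. rewrite !fib_SS.
  pose proof (fib_step x). pose proof (fib_pos x H). lia. Qed.

Lemma count_below (P : nat -> bool) b a n : (forall y, P y = true -> (y < b)%nat) ->
  (length (filter P (seq a n)) <= b - a)%nat.
Proof. revert a; induction n; intros a H; simpl; [lia|].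
  specialize (IHn (S a) H). destruct (P a) eqn:E; simpl; [pose proof (H a E)|]; lia. Qed.

Lemma window (P : nat -> bool) w a n :
  (forall x y, (a <= x)%nat -> P x = true -> P y = true -> (x <= y)%nat -> (y < x + w)%nat) ->
  (length (filter P (seq a n)) <= w)%nat.
Proof. revert a; induction n; intros a H; simpl; [lia|].
  destruct (P a) eqn:E; simpl.
  - assert (Hf : filter P (seq (S a) n) = filter (fun y => P y && Nat.ltb a y) (seq (S a) n)).
    { apply filter_ext_in. intros y Hy. apply in_seq in Hy. destruct (P y); simpl; auto.
      symmetry. apply Nat.ltb_lt. lia. }
    rewrite Hf. pose proof (count_below (fun y => P y && Nat.ltb a y) (a + w) (S a) n) as C.
    assert (w >= 1)%nat by (pose proof (H a a (le_n _) E E (le_n _)); lia).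
    assert ((length (filter (fun y => P y && Nat.ltb a y) (seq (S a) n)) <= a + w - S a)%nat).
    { apply C. intros y Hy. apply andb_true_iff in Hy. destruct Hy as [Hy1 Hy2].
      apply Nat.ltb_lt in Hy2. apply (H a y); auto; lia. }
    lia.
  - apply IHn. intros x y Hx. apply H. lia.
Qed.

Lemma d_window t K : (length (filter (fun d => Nat.eqb (fib d) t) (seq 1 K)) <= 2)%nat.
Proof. apply window. intros x y Hx Px Py Hxy. apply Nat.eqb_eq in Px, Py. apply fib_eq_close; auto; lia. Qed.

Lemma c_window v K : (length (filter (fun c => Nat.leb (fib c) v && Nat.leb v (2 * fib c)) (seq 1 K)) <= 3)%nat.
Proof. apply window. intros x y Hx Px Py Hxy.
  apply andb_true_iff in Px, Py. destruct Px as [P1 P2]; destruct Py as [P3 P4].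
  apply Nat.leb_le in P1, P2, P3, P4.
  destruct (Nat.lt_ge_cases y (x+3)); auto.
  pose proof (fib_3 x Hx). pose proof (fib_mono (x+3) y H). lia. Qed.

Lemma ind_sum_filter {A} (l : list A) P : sumR l (fun x => ind (P x)) = INR (length (filter P l)).
Proof. apply sumR_filter. Qed.

Lemma half_bound v K :
  sumR (seq 1 K) (fun c => sumR (seq 1 K) (fun d =>
     ind (Nat.eqb v (fib c + fib d) && Nat.leb (fib d) (fib c)))) <= 6.
Proof.
  apply Rle_trans with (sumR (seq 1 K) (fun c => 2 * ind (Nat.leb (fib c) v && Nat.leb v (2 * fib c)))).
  - apply sumR_le. intros c _.
    destruct (Nat.leb (fib c) v && Nat.leb v (2 * fib c)) eqn:W.
    + apply Rle_trans with (sumR (seq 1 K) (fun d => ind (Nat.eqb (fib d) (v - fib c)))).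
      * apply sumR_le. intros d _. destruct (Nat.eqb v (fib c + fib d)) eqn:E1; simpl; [|apply ind_nonneg].
        apply Nat.eqb_eq in E1. replace (Nat.eqb (fib d) (v - fib c)) with true; [apply ind_le1|].
        symmetry; apply Nat.eqb_eq; lia.
      * rewrite sumR_filter. pose proof (d_window (v - fib c) K). apply le_INR in H. simpl in *. simpl. lra.
    + apply Rle_trans with (sumR (seq 1 K) (fun d => 0)).
      * apply sumR_le. intros d _.
        destruct (Nat.eqb v (fib c + fib d) && Nat.leb (fib d) (fib c)) eqn:E; simpl; [|lra].
        exfalso. apply andb_true_iff in E. destruct E as [E1 E2]. apply Nat.eqb_eq in E1. apply Nat.leb_le in E2.
        apply andb_false_iff in W. destruct W as [W|W]; apply Nat.leb_gt in W; lia.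
      * rewrite sumR_const. simpl. lra.
  - rewrite sumR_scal, sumR_filter. pose proof (c_window v K). apply le_INR in H. replace (INR 3) with 3 in H by (simpl; lra). lra.
Qed.

Lemma quad_bound v K :
  sumR (seq 1 K) (fun c => sumR (seq 1 K) (fun d => ind (Nat.eqb v (fib c + fib d)))) <= 12.
Proof.
  apply Rle_trans with (sumR (seq 1 K) (fun c => sumR (seq 1 K) (fun d =>
     ind (Nat.eqb v (fib c + fib d) && Nat.leb (fib d) (fib c)) +
     ind (Nat.eqb v (fib d + fib c) && Nat.leb (fib c) (fib d))))).
  - apply sumR_le; intros c _; apply sumR_le; intros d _.
    destruct (Nat.eqb v (fib c + fib d)) eqn:E; simpl; [|pose proof (ind_nonneg (Nat.eqb v (fib d + fib c) && Nat.leb (fib c) (fib d))); lra].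
    apply Nat.eqb_eq in E. replace (Nat.eqb v (fib d + fib c)) with true by (symmetry; apply Nat.eqb_eq; lia). simpl.
    destruct (Nat.leb (fib d) (fib c)) eqn:E2; simpl; [pose proof (ind_nonneg (Nat.leb (fib c) (fib d))); lra|].
    apply Nat.leb_gt in E2. replace (Nat.leb (fib c) (fib d)) with true by (symmetry; apply Nat.leb_le; lia). simpl; lra.
  - assert (H := half_bound v K).
    assert (H2 : sumR (seq 1 K) (fun c => sumR (seq 1 K) (fun d => ind (Nat.eqb v (fib d + fib c) && Nat.leb (fib c) (fib d)))) <= 6).
    { rewrite sumR_swap. apply half_bound. }
    apply Rle_trans with (6 + 6); [|lra]. rewrite <- (sumR_ext _ (fun c => sumR (seq 1 K) (fun d => ind (Nat.eqb v (fib c + fib d) && Nat.leb (fib d) (fib c))) + sumR (seq 1 K) (fun d => ind (Nat.eqb v (fib d + fib c) && Nat.leb (fib c) (fib d))))).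
    + rewrite sumR_plus. lra.
    + intros; rewrite sumR_plus; reflexivity.
Qed.
Definition Ssum (I : list nat) (p x : nat) : C :=
  fold_right Cplus 0%C (map (fun n => e2pi (INR x * INR (fib n) / INR p)) I).

Definition ang (p x : nat) (t : R) := 2 * PI * (INR x * t / INR p).
Definition fz (n : nat) : Z := Z.of_nat (fib n).
Definition D (p : nat) (M : Z) : R := ind (Z.eqb (M mod Z.of_nat p) 0).

Lemma Ssum_parts I p x : fst (Ssum I p x) = sumR I (fun n => cos (ang p x (IZR (fz n)))) /\
                         snd (Ssum I p x) = sumR I (fun n => sin (ang p x (IZR (fz n)))).
Proof. induction I as [|n I IH]; [simpl; unfold sumR; simpl; split; reflexivity|].
  unfold Ssum in *. simpl fold_right. destruct IH as [H1 H2]. rewrite !sumR_cons.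
  simpl. rewrite H1, H2. unfold e2pi, ang, fz. rewrite <- INR_IZR_INZ. simpl. split; reflexivity. Qed.

Lemma ang_minus p x t1 t2 : ang p x t1 - ang p x t2 = ang p x (t1 - t2).
Proof. unfold ang, Rdiv. ring. Qed.
Lemma ang_plus p x t1 t2 : ang p x t1 + ang p x t2 = ang p x (t1 + t2).
Proof. unfold ang, Rdiv. ring. Qed.

Lemma sq_mul x : x ^ 2 = x * x. Proof. ring. Qed.

Definition Q I p x := sumR I (fun n => sumR I (fun m => cos (ang p x (IZR (fz n - fz m))))).

Lemma Cmod2_Q I p x : Cmod (Ssum I p x) ^ 2 = Q I p x.
Proof. rewrite Cmod2_alt. unfold Re, Im. destruct (Ssum_parts I p x) as [-> ->].
  rewrite !sq_mul, !sumR_mul, <- sumR_plus. unfold Q. apply sumR_ext. intros n _.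
  rewrite <- sumR_plus. apply sumR_ext. intros m _.
  rewrite minus_IZR, <- ang_minus, cos_minus. ring. Qed.

Lemma sum_x_cos p M : (0 < p)%nat -> sumR (seq 0 p) (fun x => cos (ang p x (IZR M))) = INR p * D p M.
Proof. intros Hp. unfold ang. rewrite cos_sum by auto. unfold D, ind. destruct (Z.eqb _ _); ring. Qed.

Lemma sum_x_Q I p : (0 < p)%nat -> sumR (seq 0 p) (fun x => Q I p x) =
  INR p * sumR I (fun n => sumR I (fun m => D p (fz n - fz m))).
Proof. intros Hp. unfold Q. rewrite sumR_swap, <- sumR_scal. apply sumR_ext. intros n _.
  rewrite sumR_swap, <- sumR_scal. apply sumR_ext. intros m _. apply sum_x_cos; auto. Qed.

Definition C4 I p := sumR I (fun a => sumR I (fun b => sumR I (fun c => sumR I (fun d =>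
   D p (fz a + fz b - fz c - fz d))))).

Lemma Q2_expand I p x : Q I p x ^ 2 =
  sumR I (fun n => sumR I (fun k => sumR I (fun m => sumR I (fun l =>
    / 2 * (cos (ang p x (IZR (fz n - fz m + (fz k - fz l)))) + cos (ang p x (IZR (fz n - fz m - (fz k - fz l))))))))).
Proof. unfold Q. rewrite sq_mul, sumR_mul. apply sumR_ext; intros n _. apply sumR_ext; intros k _.
  rewrite sumR_mul. apply sumR_ext; intros m _. apply sumR_ext; intros l _.
  rewrite plus_IZR, (minus_IZR (fz n - fz m) (fz k - fz l)), <- ang_plus, <- ang_minus, cos_plus, cos_minus.
  field. Qed.

Lemma sum_x_Q2 I p : (0 < p)%nat -> sumR (seq 0 p) (fun x => Q I p x ^ 2) = INR p * C4 I p.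
Proof. intros Hp.
  rewrite (sumR_ext _ _ _ (fun x _ => Q2_expand I p x)).
  assert (E : forall n k m l, sumR (seq 0 p) (fun x => / 2 * (cos (ang p x (IZR (fz n - fz m + (fz k - fz l)))) + cos (ang p x (IZR (fz n - fz m - (fz k - fz l)))))) = INR p * (/2 * (D p (fz n + fz k - fz m - fz l) + D p (fz n + fz l - fz m - fz k)))).
  { intros. rewrite sumR_scal, sumR_plus, !sum_x_cos by auto.
    replace (fz n - fz m + (fz k - fz l))%Z with (fz n + fz k - fz m - fz l)%Z by ring.
    replace (fz n - fz m - (fz k - fz l))%Z with (fz n + fz l - fz m - fz k)%Z by ring. ring. }
  transitivity (sumR I (fun n => sumR I (fun k => sumR I (fun m => sumR I (fun l =>
     INR p * (/2 * (D p (fz n + fz k - fz m - fz l) + D p (fz n + fz l - fz m - fz k)))))))).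
  { rewrite sumR_swap. apply sumR_ext; intros n _. rewrite sumR_swap. apply sumR_ext; intros k _.
    rewrite sumR_swap. apply sumR_ext; intros m _. rewrite sumR_swap. apply sumR_ext; intros l _. apply E. }
  unfold C4. rewrite <- sumR_scal. apply sumR_ext; intros n _.
  transitivity (INR p * (/2 * (sumR I (fun k => sumR I (fun m => sumR I (fun l => D p (fz n + fz k - fz m - fz l)))) +
     sumR I (fun k => sumR I (fun m => sumR I (fun l => D p (fz n + fz l - fz m - fz k))))))).
  { rewrite <- !sumR_plus, <- !sumR_scal. apply sumR_ext; intros k _.
    rewrite <- !sumR_plus, <- !sumR_scal. apply sumR_ext; intros m _.
    rewrite <- !sumR_plus, <- !sumR_scal. apply sumR_ext; intros l _. ring. }
  assert (SW : sumR I (fun k => sumR I (fun m => sumR I (fun l => D p (fz n + fz l - fz m - fz k)))) =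
               sumR I (fun k => sumR I (fun m => sumR I (fun l => D p (fz n + fz k - fz m - fz l))))).
  { rewrite sumR_swap. transitivity (sumR I (fun m => sumR I (fun l => sumR I (fun k => D p (fz n + fz l - fz m - fz k))))).
    { apply sumR_ext; intros m _. apply sumR_swap. }
    rewrite sumR_swap. apply sumR_ext; intros l _. apply sumR_ext; intros m _. apply sumR_ext; intros k _. reflexivity. }
  rewrite SW. field. Qed.
Lemma D_zero p : (0 < p)%nat -> D p 0 = 1.
Proof. intros. unfold D. rewrite Zmod_0_l. reflexivity. Qed.

Lemma D_nonneg p M : 0 <= D p M. Proof. apply ind_nonneg. Qed.

Lemma seq_len_INR K : INR (length (seq 1 K)) = INR K.
Proof. rewrite length_seq; reflexivity. Qed.

Definition C2 I p := sumR I (fun n => sumR I (fun m => D p (fz n - fz m))).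

Lemma C2_lower p K : (0 < p)%nat -> INR K <= C2 (seq 1 K) p.
Proof. intros Hp. unfold C2.
  apply Rle_trans with (sumR (seq 1 K) (fun _ => 1)).
  { rewrite sumR_const, seq_len_INR. lra. }
  apply sumR_le. intros n Hn.
  apply Rle_trans with (D p (fz n - fz n)).
  { rewrite Z.sub_diag, D_zero; auto; lra. }
  apply (sumR_term _ (fun m => D p (fz n - fz m))); auto. intros; apply D_nonneg. Qed.

Definition bad2 (p n m : nat) : bool :=
  negb (Z.eqb (fz n - fz m) 0) && Z.eqb ((fz n - fz m) mod Z.of_nat p) 0.
Definition good2b (p : nat) (I : list nat) : bool :=
  forallb (fun n => forallb (fun m => negb (bad2 p n m)) I) I.

Lemma C2_upper p K : good2b p (seq 1 K) = true -> C2 (seq 1 K) p <= 2 * INR K.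
Proof. intros G. unfold C2.
  apply Rle_trans with (sumR (seq 1 K) (fun _ => 2)).
  2: { rewrite sumR_const, seq_len_INR. lra. }
  apply sumR_le. intros n Hn.
  apply Rle_trans with (sumR (seq 1 K) (fun m => ind (Nat.eqb (fib m) (fib n)))).
  2: { rewrite sumR_filter. pose proof (d_window (fib n) K) as H. apply le_INR in H.
       replace (INR 2) with 2 in H by (simpl; lra). exact H. }
  apply sumR_le. intros m Hm. unfold D.
  destruct (Z.eqb ((fz n - fz m) mod Z.of_nat p) 0) eqn:E; simpl; [|apply ind_nonneg].
  unfold good2b in G. rewrite forallb_forall in G. specialize (G n Hn). rewrite forallb_forall in G.
  specialize (G m Hm). unfold bad2 in G. rewrite E in G.
  destruct (Z.eqb_spec (fz n - fz m) 0) as [Z0|Z0]; [|simpl in G; discriminate].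
  unfold fz in Z0. replace (Nat.eqb (fib m) (fib n)) with true; [simpl; lra|]. symmetry. apply Nat.eqb_eq. lia. Qed.

Definition bad4 (p a b c d : nat) : bool :=
  negb (Z.eqb (fz a + fz b - fz c - fz d) 0) && Z.eqb ((fz a + fz b - fz c - fz d) mod Z.of_nat p) 0.
Definition Ebad I p := sumR I (fun a => sumR I (fun b => sumR I (fun c => sumR I (fun d => ind (bad4 p a b c d))))).

Lemma C4_upper p K : C4 (seq 1 K) p <= 12 * INR K ^ 2 + Ebad (seq 1 K) p.
Proof. unfold C4, Ebad.
  set (I := seq 1 K).
  apply Rle_trans with (sumR I (fun a => sumR I (fun b => sumR I (fun c => sumR I (fun d =>
     ind (Nat.eqb (fib a + fib b) (fib c + fib d)) + ind (bad4 p a b c d)))))).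
  { apply sumR_le; intros a _; apply sumR_le; intros b _; apply sumR_le; intros c _; apply sumR_le; intros d _.
    unfold D, bad4. destruct (Z.eqb_spec (fz a + fz b - fz c - fz d) 0) as [Z0|Z0].
    - unfold fz in Z0. replace (Nat.eqb (fib a + fib b) (fib c + fib d)) with true by (symmetry; apply Nat.eqb_eq; lia).
      simpl. pose proof (ind_le1 (Z.eqb ((fz a + fz b - fz c - fz d) mod Z.of_nat p) 0)). lra.
    - simpl. pose proof (ind_nonneg (Nat.eqb (fib a + fib b) (fib c + fib d))). lra. }
  replace (12 * INR K ^ 2) with (sumR I (fun a => sumR I (fun b => 12))).
  2: { rewrite !sumR_const. unfold I. rewrite seq_len_INR. ring. }
  rewrite <- sumR_plus. apply sumR_le; intros a _. rewrite <- sumR_plus. apply sumR_le; intros b _.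
  rewrite <- (sumR_ext _ (fun c => sumR I (fun d => ind (Nat.eqb (fib a + fib b) (fib c + fib d))) + sumR I (fun d => ind (bad4 p a b c d)))).
  2: { intros; rewrite sumR_plus; reflexivity. }
  rewrite sumR_plus. pose proof (quad_bound (fib a + fib b) K). fold I in H. lra. Qed.

Lemma per_prime p K : (0 < p)%nat -> (1 <= K)%nat -> good2b p (seq 1 K) = true ->
  Ebad (seq 1 K) p <= INR K ^ 2 ->
  let avg := / INR p * sumR (seq 0 p) (fun x => Cmod (Ssum (seq 1 K) p x)) in
  0 <= avg /\ INR K / 13 <= avg ^ 2 /\ avg ^ 2 <= 2 * INR K.
Proof. intros Hp HK G2 G4 avg.
  set (I := seq 1 K) in *.
  set (a := fun x => Cmod (Ssum I p x)).
  assert (Ha : forall x, In x (seq 0 p) -> 0 <= a x) by (intros; apply Cmod_ge_0).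
  assert (PR : 0 < INR p) by (apply lt_0_INR; lia).
  assert (KR : 1 <= INR K) by (apply (le_INR 1); lia).
  assert (S2 : sumR (seq 0 p) (fun x => a x ^ 2) = INR p * C2 I p).
  { unfold C2. rewrite <- sum_x_Q by auto. apply sumR_ext; intros; apply Cmod2_Q. }
  assert (S4 : sumR (seq 0 p) (fun x => a x ^ 4) = INR p * C4 I p).
  { rewrite <- sum_x_Q2 by auto. apply sumR_ext; intros. unfold a. rewrite <- Cmod2_Q. ring. }
  assert (L2 := C2_lower p K Hp). assert (U2 := C2_upper p K G2). assert (U4 := C4_upper p K).
  fold I in L2, U2, U4.
  assert (S1nn : 0 <= sumR (seq 0 p) a) by (apply sumR_nonneg; auto).
  assert (avgE : avg = sumR (seq 0 p) a / INR p) by (unfold avg, a; unfold Rdiv; ring).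
  split; [rewrite avgE; apply Rdiv_le_0_compat; lra|].
  assert (CSb := CS (seq 0 p) (fun _ => 1) a). cbv beta in CSb.
  rewrite (sumR_ext _ (fun x => 1 * a x) a) in CSb by (intros; ring).
  rewrite (sumR_ext _ (fun x => 1 ^ 2) (fun _ => 1)) in CSb by (intros; ring).
  rewrite sumR_const, length_seq, S2 in CSb.
  assert (Ho := holder (seq 0 p) a Ha). rewrite S2, S4 in Ho.
  set (S1 := sumR (seq 0 p) a) in *.
  rewrite avgE. replace ((S1 / INR p)^2) with (S1^2 / INR p ^ 2) by (field; lra).
  split.
  - apply Rmult_le_reg_r with (INR p ^ 2); [nra|].
    replace (S1 ^ 2 / INR p ^ 2 * INR p ^ 2) with (S1 ^ 2) by (field; lra).
    assert (Hc : INR p ^ 3 * INR K ^ 3 <= S1 ^ 2 * (INR p * (13 * INR K ^ 2))).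
    { apply Rle_trans with ((INR p * C2 I p) ^ 3).
      { replace ((INR p * C2 I p)^3) with (INR p ^ 3 * C2 I p ^ 3) by ring.
        apply Rmult_le_compat_l; [nra|]. apply pow_incr; lra. }
      apply Rle_trans with (1 := Ho). apply Rmult_le_compat_l; [nra|]. apply Rmult_le_compat_l; lra. }
    apply Rmult_le_reg_r with (13 * INR p * INR K ^ 2); [apply Rmult_lt_0_compat; [lra|apply pow_lt; lra]|].
    replace (INR K / 13 * INR p ^ 2 * (13 * INR p * INR K ^ 2)) with (INR p ^ 3 * INR K ^ 3) by (field; lra).
    replace (S1 ^ 2 * (13 * INR p * INR K ^ 2)) with (S1 ^ 2 * (INR p * (13 * INR K ^ 2))) by ring.
    exact Hc.
  - apply Rmult_le_reg_r with (INR p ^ 2); [nra|].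
    replace (S1 ^ 2 / INR p ^ 2 * INR p ^ 2) with (S1 ^ 2) by (field; lra).
    apply Rle_trans with (1 := CSb). replace (INR p * 1 * (INR p * C2 I p)) with (INR p ^ 2 * C2 I p) by ring.
    nra.
Qed.
Lemma isprime_spec p : isprime p = true <-> prime (Z.of_nat p).
Proof. unfold isprime. destruct (prime_dec (Z.of_nat p)); split; intros; auto; discriminate. Qed.

Lemma distinct_primes (l : list nat) (M : Z) : NoDup l ->
  (forall p, In p l -> prime (Z.of_nat p) /\ (Z.of_nat p | M)) -> M <> 0%Z ->
  (2 ^ Z.of_nat (length l) <= Z.abs M)%Z.
Proof. revert M. induction l as [|p l IH]; intros M ND H M0.
  - simpl. lia.
  - destruct (H p (or_introl eq_refl)) as [Pp [M' HM]]. subst M.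
    assert (M'0 : M' <> 0%Z) by (intro; subst; lia).
    inversion ND; subst.
    assert (IH' := IH M' H3). 
    assert (2 ^ Z.of_nat (length l) <= Z.abs M')%Z.
    { apply IH'; auto. intros q Hq. destruct (H q (or_intror Hq)) as [Pq Dq]. split; auto.
      destruct (prime_mult _ Pq _ _ Dq) as [D|D]; auto.
      assert (Z.of_nat q = Z.of_nat p) by (apply prime_div_prime; auto). 
      exfalso. apply H2. replace p with q by lia. auto. }
    assert (2 <= Z.of_nat p)%Z by (destruct Pp; lia).
    simpl length. rewrite Nat2Z.inj_succ, Z.pow_succ_r by lia. rewrite Z.abs_mul. nia.
Qed.

Lemma prime_div_count (N : nat) (M : Z) (B : nat) : M <> 0%Z -> (Z.abs M <= 2 ^ Z.of_nat B)%Z ->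
  sumR (seq 0 (S N)) (fun p => ind (isprime p && Z.eqb (M mod Z.of_nat p) 0)) <= INR B.
Proof. intros M0 MB. rewrite sumR_filter. apply le_INR.
  set (l := filter _ _).
  assert (H : (2 ^ Z.of_nat (length l) <= Z.abs M)%Z).
  { apply distinct_primes; auto. apply NoDup_filter, seq_NoDup.
    intros p Hp. unfold l in Hp. apply filter_In in Hp. destruct Hp as [_ Hp]. apply andb_true_iff in Hp.
    destruct Hp as [P1 P2]. apply isprime_spec in P1. split; auto.
    apply Z.eqb_eq in P2. apply Z.mod_divide; auto. destruct P1; lia. }
  assert (2 ^ Z.of_nat (length l) <= 2 ^ Z.of_nat B)%Z by lia.
  destruct (Nat.le_gt_cases (length l) B); auto.
  assert (2 ^ Z.of_nat B < 2 ^ Z.of_nat (length l))%Z by (apply Z.pow_lt_mono_r; lia). lia.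
Qed.

Lemma ind_and a b : ind (a && b) = ind a * ind b.
Proof. destruct a, b; simpl; ring. Qed.

Lemma ind_forallb {A} (f : A -> bool) l : ind (negb (forallb f l)) <= sumR l (fun x => ind (negb (f x))).
Proof. induction l; simpl; [unfold sumR; simpl; lra|]. rewrite sumR_cons.
  destruct (f a); simpl; [|pose proof (sumR_nonneg l (fun x => ind (negb (f x))) (fun x _ => ind_nonneg _)); lra].
  lra. Qed.

Lemma fz_bound n K : (n <= K)%nat -> (0 <= fz n <= 2 ^ Z.of_nat K)%Z.
Proof. intros H. unfold fz. pose proof (fib_le_pow n). pose proof (Nat.pow_le_mono_r 2 n K ltac:(lia) H).
  assert (Z.of_nat (2^K) = 2 ^ Z.of_nat K)%Z by (rewrite Nat2Z.inj_pow; reflexivity). lia. Qed.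

Lemma bad2_total N K :
  sumR (seq 0 (S N)) (fun p => ind (isprime p && negb (good2b p (seq 1 K)))) <= INR K ^ 3.
Proof.
  set (I := seq 1 K).
  apply Rle_trans with (sumR (seq 0 (S N)) (fun p => sumR I (fun n => sumR I (fun m => ind (isprime p && bad2 p n m))))).
  { apply sumR_le; intros p _. rewrite ind_and. unfold good2b.
    apply Rle_trans with (ind (isprime p) * sumR I (fun n => sumR I (fun m => ind (bad2 p n m)))).
    { apply Rmult_le_compat_l; [apply ind_nonneg|]. eapply Rle_trans; [apply ind_forallb|].
      apply sumR_le; intros n _. eapply Rle_trans; [apply ind_forallb|]. apply sumR_le; intros m _.
      rewrite negb_involutive. lra. }
    rewrite <- sumR_scal. apply sumR_le; intros n _. rewrite <- sumR_scal. apply sumR_le; intros m _.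
    rewrite ind_and; lra. }
  rewrite sumR_swap.
  replace (INR K ^ 3) with (sumR I (fun n => sumR I (fun m => INR K))).
  2: { rewrite !sumR_const. unfold I. rewrite seq_len_INR. ring. }
  apply sumR_le; intros n Hn. rewrite sumR_swap. apply sumR_le; intros m Hm.
  unfold I in Hn, Hm. apply in_seq in Hn, Hm.
  destruct (Z.eqb_spec (fz n - fz m) 0) as [Z0|Z0].
  - apply Rle_trans with (sumR (seq 0 (S N)) (fun _ => 0)).
    + apply sumR_le; intros p _. unfold bad2. rewrite Z0. simpl. rewrite andb_false_r. simpl; lra.
    + rewrite sumR_const. rewrite Rmult_0_r. apply pos_INR.
  - rewrite (sumR_ext _ _ (fun p => ind (isprime p && Z.eqb ((fz n - fz m) mod Z.of_nat p) 0))).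
    2: { intros; unfold bad2. apply Z.eqb_neq in Z0. rewrite Z0. reflexivity. }
    apply prime_div_count; auto.
    pose proof (fz_bound n K ltac:(lia)). pose proof (fz_bound m K ltac:(lia)). lia.
Qed.

Definition badE (I : list nat) (K : nat) (p : nat) : bool :=
  if Rle_dec (Ebad I p) (INR K ^ 2) then false else true.

Lemma bad4_total N K : (1 <= K)%nat ->
  sumR (seq 0 (S N)) (fun p => ind (isprime p && badE (seq 1 K) K p)) <= INR K ^ 2 * (INR K + 1).
Proof. intros HK.
  set (I := seq 1 K). assert (KR : 1 <= INR K) by (apply (le_INR 1); lia).
  assert (Mk : forall p, INR K ^ 2 * ind (isprime p && badE I K p) <= sumR I (fun a => sumR I (fun b => sumR I (fun c => sumR I (fun d => ind (isprime p && bad4 p a b c d)))))).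
  { intros p. assert (E : sumR I (fun a => sumR I (fun b => sumR I (fun c => sumR I (fun d => ind (isprime p && bad4 p a b c d))))) = ind (isprime p) * Ebad I p).
    { unfold Ebad. rewrite <- sumR_scal. apply sumR_ext; intros. rewrite <- sumR_scal. apply sumR_ext; intros.
      rewrite <- sumR_scal. apply sumR_ext; intros. rewrite <- sumR_scal. apply sumR_ext; intros. apply ind_and. }
    rewrite E, ind_and. unfold badE. destruct (Rle_dec (Ebad I p) (INR K ^ 2)); simpl.
    - rewrite Rmult_0_r, Rmult_0_r. apply Rmult_le_pos; [apply ind_nonneg|]. unfold Ebad.
      repeat (apply sumR_nonneg; intros). apply ind_nonneg.
    - destruct (isprime p); simpl; lra. }
  apply Rmult_le_reg_l with (INR K ^ 2); [apply pow_lt; lra|].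
  rewrite <- sumR_scal. eapply Rle_trans; [apply sumR_le; intros; apply Mk|].
  rewrite sumR_swap.
  replace (INR K ^ 2 * (INR K ^ 2 * (INR K + 1))) with (sumR I (fun a => sumR I (fun b => sumR I (fun c => sumR I (fun d => INR K + 1))))).
  2: { rewrite !sumR_const. unfold I. rewrite seq_len_INR. ring. }
  apply sumR_le; intros a Ha. rewrite sumR_swap. apply sumR_le; intros b Hb. rewrite sumR_swap.
  apply sumR_le; intros c Hc. rewrite sumR_swap. apply sumR_le; intros d Hd.
  unfold I in *. apply in_seq in Ha, Hb, Hc, Hd.
  destruct (Z.eqb_spec (fz a + fz b - fz c - fz d) 0) as [Z0|Z0].
  - apply Rle_trans with (sumR (seq 0 (S N)) (fun _ => 0)).
    + apply sumR_le; intros p _. unfold bad4. rewrite Z0. simpl. rewrite andb_false_r. simpl; lra.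
    + rewrite sumR_const. rewrite Rmult_0_r. lra.
  - rewrite (sumR_ext _ _ (fun p => ind (isprime p && Z.eqb ((fz a + fz b - fz c - fz d) mod Z.of_nat p) 0))).
    2: { intros; unfold bad4. apply Z.eqb_neq in Z0. rewrite Z0. reflexivity. }
    rewrite <- S_INR. apply prime_div_count; auto.
    pose proof (fz_bound a K ltac:(lia)). pose proof (fz_bound b K ltac:(lia)).
    pose proof (fz_bound c K ltac:(lia)). pose proof (fz_bound d K ltac:(lia)).
    rewrite Nat2Z.inj_succ, Z.pow_succ_r by lia. lia.
Qed.

Lemma filter_none {A} (P : A -> bool) l : (forall y, In y l -> P y = false) -> filter P l = nil.
Proof. induction l; simpl; intros H; auto. rewrite H by (left; auto). apply IHl. intros; apply H; right; auto. Qed.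

Lemma filter_prefix (P : nat -> bool) a n :
  (forall x y, (x <= y)%nat -> P y = true -> P x = true) ->
  filter P (seq a n) = seq a (length (filter P (seq a n))).
Proof. intros HP. revert a; induction n; intros a; simpl; [reflexivity|].
  destruct (P a) eqn:E.
  - simpl. f_equal. apply IHn.
  - rewrite filter_none; [reflexivity|]. intros y Hy. apply in_seq in Hy.
    destruct (P y) eqn:Ey; auto. rewrite (HP a y ltac:(lia) Ey) in E. discriminate. Qed.

Definition Pg (gamma : R) (N : nat) (n : nat) : bool :=
  if Rle_dec (INR n) (Rpower (INR N) gamma) then true else false.

Lemma Kbounds gamma N : 0 < gamma < 1 -> (2 <= N)%nat ->
  let I := filter (Pg gamma N) (seq 1 N) in
  I = seq 1 (length I) /\ INR (length I) <= Rpower (INR N) gamma /\ Rpower (INR N) gamma < INR (length I) + 1.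
Proof. intros Hg HN I.
  assert (E : I = seq 1 (length I)).
  { apply filter_prefix. intros x y Hxy. unfold Pg. destruct (Rle_dec (INR y) _); [|discriminate].
    intros _. destruct (Rle_dec (INR x) _) as [|n]; auto. exfalso; apply n. apply Rle_trans with (INR y); auto. apply le_INR; auto. }
  set (K := length I) in *.
  assert (NR : 2 <= INR N) by (apply (le_INR 2); auto).
  assert (XN : Rpower (INR N) gamma < INR N).
  { rewrite <- (Rpower_1 (INR N)) at 2 by lra. apply Rpower_lt; lra. }
  assert (KN : (K <= N)%nat).
  { unfold K, I. pose proof (filter_length_le (Pg gamma N) (seq 1 N)) as H. rewrite length_seq in H. exact H. }
  split; auto. split.
  - destruct K as [|k] eqn:EK.
    + simpl. unfold Rpower. left. apply exp_pos.
    + assert (In (S k) I) by (rewrite E; apply in_seq; lia).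
      unfold I in H. apply filter_In in H. destruct H as [_ H]. unfold Pg in H.
      destruct (Rle_dec _ _); auto; discriminate.
  - destruct (Nat.eq_dec K N) as [EN|EN].
    + exfalso.
      assert (In N I) by (rewrite E; apply in_seq; lia).
      unfold I in H. apply filter_In in H. destruct H as [_ H]. unfold Pg in H.
      destruct (Rle_dec _ _); [lra|discriminate].
    + assert (In (S K) (seq 1 N)) by (apply in_seq; lia).
      destruct (Pg gamma N (S K)) eqn:PK.
      * assert (In (S K) I) by (unfold I; apply filter_In; auto). rewrite E in H0. apply in_seq in H0. lia.
      * unfold Pg in PK. destruct (Rle_dec _ _); [discriminate|]. rewrite S_INR in n. lra.
Qed.

Lemma avg_eq gamma N p :
  avg_abs gamma N p = / INR p * sumR (seq 0 p) (fun x => Cmod (Ssum (filter (Pg gamma N) (seq 1 N)) p x)).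
Proof. reflexivity. Qed.

Lemma rpow_half x g : 0 < x -> Rpower x (g / 2) = sqrt (Rpower x g).
Proof. intros Hx. rewrite <- Rpower_sqrt by (unfold Rpower; apply exp_pos). rewrite Rpower_mult. f_equal. Qed.

Lemma good_of gamma N p : 0 < gamma < 1 -> (2 <= N)%nat -> 2 <= Rpower (INR N) gamma ->
  isprime p = true ->
  good2b p (seq 1 (length (filter (Pg gamma N) (seq 1 N)))) = true ->
  badE (seq 1 (length (filter (Pg gamma N) (seq 1 N)))) (length (filter (Pg gamma N) (seq 1 N))) p = false ->
  good gamma (1/6) 2 N p = true.
Proof. intros Hg HN X2 Pp G2 G4.
  destruct (Kbounds gamma N Hg HN) as [E [K1 K2]].
  set (K := length (filter (Pg gamma N) (seq 1 N))) in *.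
  set (X := Rpower (INR N) gamma) in *.
  assert (p2 : (0 < p)%nat) by (apply isprime_spec in Pp; destruct Pp; lia).
  assert (HK : (1 <= K)%nat) by (destruct K; [simpl in K2; lra|lia]).
  assert (G4' : Ebad (seq 1 K) p <= INR K ^ 2) by (unfold badE in G4; destruct (Rle_dec _ _); [auto|discriminate]).
  destruct (per_prime p K p2 HK G2 G4') as [A0 [A1 A2]].
  unfold good. rewrite avg_eq. fold (Pg gamma N). rewrite E. fold K.
  set (avg := / INR p * sumR (seq 0 p) (fun x => Cmod (Ssum (seq 1 K) p x))) in *.
  assert (NR : 0 < INR N) by (apply lt_0_INR; lia).
  rewrite rpow_half by auto. fold X.
  assert (SX := sqrt_sqrt X ltac:(lra)). assert (S0 := sqrt_pos X).
  destruct (Rle_dec (1 / 6 * sqrt X) avg) as [L|L].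
  - destruct (Rle_dec avg (2 * sqrt X)) as [U|U]; [reflexivity|].
    exfalso. apply U. apply Rnot_le_lt in U. nra.
  - exfalso. apply L. destruct (Rle_dec (1/6 * sqrt X) avg); auto. apply Rnot_le_lt in n. nra.
Qed.

Lemma count_lower gamma N : 0 < gamma < 1 -> (2 <= N)%nat -> 2 <= Rpower (INR N) gamma ->
  INR (prime_pi N) <= INR (good_count gamma (1/6) 2 N) + 3 * Rpower (INR N) gamma ^ 3 /\
  INR (good_count gamma (1/6) 2 N) <= INR (prime_pi N).
Proof. intros Hg HN X2.
  destruct (Kbounds gamma N Hg HN) as [E [K1 K2]].
  set (K := length (filter (Pg gamma N) (seq 1 N))) in *.
  set (X := Rpower (INR N) gamma) in *.
  assert (HK : (1 <= K)%nat) by (destruct K; [simpl in K2; lra|lia]).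
  assert (KR : 1 <= INR K) by (apply (le_INR 1); lia).
  unfold prime_pi, good_count. rewrite <- !sumR_filter.
  split.
  - apply Rle_trans with (sumR (seq 0 (S N)) (fun p => ind (isprime p && good gamma (1/6) 2 N p) +
       ind (isprime p && negb (good2b p (seq 1 K))) + ind (isprime p && badE (seq 1 K) K p))).
    + apply sumR_le. intros p _. destruct (isprime p) eqn:Pp; simpl; [|lra].
      destruct (good2b p (seq 1 K)) eqn:G2; destruct (badE (seq 1 K) K p) eqn:G4; simpl;
        try (pose proof (ind_nonneg (good gamma (1/6) 2 N p)); lra).
      rewrite (good_of gamma N p Hg HN X2 Pp G2 G4). simpl. lra.
    + rewrite !sumR_plus. pose proof (bad2_total N K). pose proof (bad4_total N K HK).
      assert (INR K ^ 3 + INR K ^ 2 * (INR K + 1) <= 3 * X ^ 3).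
      { assert (INR K ^ 3 <= X ^ 3) by (apply pow_incr; lra). nra. }
      lra.
  - apply sumR_le. intros p _. destruct (isprime p); simpl; [apply ind_le1|lra].
Qed.

Lemma prime_pi_mono M N : (M <= N)%nat -> (prime_pi M <= prime_pi N)%nat.
Proof. intros H. unfold prime_pi. replace (S N) with (S M + (N - M))%nat by lia.
  rewrite seq_app, filter_app, length_app. lia. Qed.

Lemma ln_lt_self y : 0 < y -> ln y < y.
Proof. intros Hy. pose proof (exp_ineq1_le (ln y)). rewrite exp_ln in H by auto. lra. Qed.

Lemma pi_lower N : (2 <= N)%nat -> ln 2 * INR N <= 4 * ln (INR N) * INR (prime_pi N).
Proof. intros HN.
  set (n := Nat.div N 2).
  assert (Hn1 : (1 <= n)%nat) by (unfold n; apply Nat.div_le_lower_bound; lia).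
  assert (Hn2 : (2 * n <= N)%nat) by (unfold n; apply Nat.mul_div_le; lia).
  assert (Hn3 : (N <= 2 * n + 1)%nat) by (unfold n; pose proof (Nat.div_mod N 2 ltac:(lia)); pose proof (Nat.mod_upper_bound N 2 ltac:(lia)); lia).
  pose proof (Cheb.cheb_std n ltac:(lia)) as C. rewrite !Cheb.expn_pow in C.
  change (ssrnat.muln 2 n) with (2 * n)%nat in C.
  fold (prime_pi (2 * n)) in C.
  set (q := prime_pi (2 * n)) in *.
  apply le_INR in C. rewrite !pow_INR in C.
  apply ln_le in C; [|apply pow_lt; simpl; lra].
  rewrite !ln_pow in C by (try (simpl; lra); apply lt_0_INR; lia).
  assert (q <= prime_pi N)%nat by (apply prime_pi_mono; auto).
  apply le_INR in H.
  assert (L2 : 0 < ln 2) by (rewrite <- ln_1; apply ln_increasing; lra).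
  assert (E2n : 2 <= INR (2 * n)) by (apply (le_INR 2); lia).
  assert (LL : ln (INR (2 * n)) <= ln (INR N)) by (apply ln_le; [lra|apply le_INR; auto]).
  assert (Lp : 0 < ln (INR (2 * n))) by (rewrite <- ln_1; apply ln_increasing; lra).
  assert (NR : INR N <= 4 * INR n).
  { apply le_INR in Hn3. rewrite plus_INR, mult_INR in Hn3. simpl in Hn3. apply (le_INR 1) in Hn1. simpl in Hn1. lra. }
  replace (INR 2) with 2 in C by reflexivity.
  assert (0 <= INR q) by apply pos_INR.
  assert (INR n * ln 2 <= INR (prime_pi N) * ln (INR N)) by nra.
  nra.
Qed.

Lemma INR_up r : 0 < r -> r < INR (Z.to_nat (up r)).
Proof. intros Hr. destruct (archimed r) as [H1 _]. rewrite INR_IZR_INZ, Z2Nat.id; [lra|].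
  apply le_IZR. lra. Qed.

Lemma eventually_large gamma B : 0 < gamma -> 0 < B ->
  exists N0, forall N, (N0 <= N)%nat -> B <= Rpower (INR N) gamma.
Proof. intros Hg HB. set (r := Rpower B (/ gamma)).
  assert (rp : 0 < r) by (unfold r, Rpower; apply exp_pos).
  exists (Z.to_nat (up r)). intros N HN.
  assert (r < INR N) by (apply Rlt_le_trans with (1 := INR_up r rp); apply le_INR; auto).
  replace B with (Rpower r gamma) by (unfold r; rewrite Rpower_mult; replace (/ gamma * gamma) with 1 by (field; lra); apply Rpower_1; auto).
  apply Rle_Rpower_l; lra.
Qed.

Lemma lim_rpow_neg d : 0 < d -> is_lim_seq (fun N => Rpower (INR N) (- d)) 0.
Proof. intros Hd. apply is_lim_seq_spec. intros eps.
  destruct (eventually_large d (2 / eps) Hd) as [N0 HN0].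
  { apply Rdiv_lt_0_compat; [lra|apply cond_pos]. }
  exists (S N0). intros N HN. specialize (HN0 N ltac:(lia)).
  assert (NP : 0 < INR N) by (apply lt_0_INR; lia).
  rewrite Rpower_Ropp, Rminus_0_r.
  assert (P : 0 < Rpower (INR N) d) by (unfold Rpower; apply exp_pos).
  rewrite Rabs_right by (left; apply Rinv_0_lt_compat; auto).
  pose proof (cond_pos eps).
  apply Rmult_lt_reg_l with (Rpower (INR N) d); auto. rewrite Rinv_r by lra.
  assert (2 <= Rpower (INR N) d * eps).
  { apply Rmult_le_reg_r with (/ eps); [apply Rinv_0_lt_compat; lra|]. rewrite Rmult_assoc, Rinv_r, Rmult_1_r by lra. exact HN0. }
  lra.
Qed.

Theorem theorem6 (gamma : R) :
  0 < gamma < 1 / 3 ->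
  exists c1 c2 : R, 0 < c1 /\ 0 < c2 /\
    is_lim_seq (fun N : nat => INR (good_count gamma c1 c2 N) / INR (prime_pi N)) 1.
Proof.
  intros [g0 g1]. exists (1/6), 2. split; [lra|]. split; [lra|].
  assert (Hg : 0 < gamma < 1) by lra.
  set (d := (1 - 3 * gamma) / 2).
  assert (d0 : 0 < d) by (unfold d; lra).
  assert (L2 : 0 < ln 2) by (rewrite <- ln_1; apply ln_increasing; lra).
  set (C := 12 / (d * ln 2)).
  assert (Lu : is_lim_seq (fun N => 1 - C * Rpower (INR N) (- d)) 1).
  { pose proof (is_lim_seq_scal_l _ C _ (lim_rpow_neg d d0)) as H. simpl in H.
    pose proof (is_lim_seq_minus' _ _ 1 (C * 0) (is_lim_seq_const 1) H) as H2.
    replace (1 - C * 0) with 1 in H2 by ring. exact H2. }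
  apply (is_lim_seq_le_le_loc (fun N => 1 - C * Rpower (INR N) (- d)) _ (fun _ => 1)); [|exact Lu|apply is_lim_seq_const].
  destruct (eventually_large gamma 2 g0 ltac:(lra)) as [N1 HN1].
  exists (Nat.max 2 N1). intros N HN.
  assert (HN2 : (2 <= N)%nat) by lia.
  assert (X2 := HN1 N ltac:(lia)).
  destruct (count_lower gamma N Hg HN2 X2) as [CL CU].
  pose proof (pi_lower N HN2) as PL.
  set (X := Rpower (INR N) gamma) in *.
  set (G := INR (good_count gamma (1 / 6) 2 N)) in *.
  set (P := INR (prime_pi N)) in *.
  assert (NR : 2 <= INR N) by (apply (le_INR 2); auto).
  assert (LN : 0 < ln (INR N)) by (rewrite <- ln_1; apply ln_increasing; lra).
  assert (P0 : 0 < P).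
  { destruct (Rle_lt_dec P 0) as [h|h]; auto. assert (0 <= P) by apply pos_INR.
    assert (P = 0) by lra. rewrite H0 in PL. nra. }
  set (Y := Rpower (INR N) (- d)).
  set (A := Rpower (INR N) d).
  assert (Y0 : 0 < Y) by (unfold Y, Rpower; apply exp_pos).
  assert (A0 : 0 < A) by (unfold A, Rpower; apply exp_pos).
  assert (XA : X ^ 3 * A = INR N * Y).
  { unfold X, A, Y. rewrite <- Rpower_pow by (unfold Rpower; apply exp_pos).
    rewrite Rpower_mult. rewrite <- Rpower_plus.
    replace (INR N * Rpower (INR N) (-d)) with (Rpower (INR N) 1 * Rpower (INR N) (-d)) by (rewrite Rpower_1; lra).
    rewrite <- Rpower_plus. f_equal. unfold d. simpl. field. }
  assert (AL : d * ln (INR N) < A).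
  { unfold A. rewrite <- ln_Rpower. apply ln_lt_self. unfold Rpower; apply exp_pos. }
  assert (KEY : 3 * X ^ 3 <= C * Y * P).
  { apply Rmult_le_reg_r with A; auto.
    replace (3 * X ^ 3 * A) with (3 * (INR N * Y)) by (rewrite <- XA; ring).
    apply Rle_trans with (C * Y * P * (d * ln (INR N))).
    - unfold C. apply Rmult_le_reg_r with (ln 2); auto.
      replace (12 / (d * ln 2) * Y * P * (d * ln (INR N)) * ln 2) with (3 * Y * (4 * ln (INR N) * P)) by (field; lra).
      replace (3 * (INR N * Y) * ln 2) with (3 * Y * (ln 2 * INR N)) by ring.
      apply Rmult_le_compat_l; [lra|]. exact PL.
    - apply Rmult_le_compat_l; [|lra]. unfold C. apply Rmult_le_pos; [|lra].
      apply Rmult_le_pos; [|lra]. apply Rdiv_le_0_compat; [lra|]. apply Rmult_lt_0_compat; lra. }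
  split.
  - apply Rmult_le_reg_r with P; auto. unfold Rdiv. rewrite Rmult_assoc, Rinv_l, Rmult_1_r by lra. nra.
  - apply Rmult_le_reg_r with P; auto. unfold Rdiv. rewrite Rmult_assoc, Rinv_l, Rmult_1_r by lra. lra.
Qed.
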